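(* Let $s > \frac12$, $T>0$, and let $v \in C([0,T];H^s(\mathbb T))$ be a solution of \[\partial_t \hat{v}(n) - ip(n) \hat{v}(n) = -\frac{\mu i}{(2\pi)^2} n\big(|\hat{v}(n)|^2 - |\hat{v}_0(n)|^2\big) \hat{v}(n) + \frac{\mu i}{3(2\pi)^2}n \sum_{\mathcal N_n} \hat{v}(n_1)\hat{v}(n_2)\hat{v}(n_3),\qquad n\in\mathbb Z,\] with $v(0)=v_0$. Then \[\Big\|\mathcal F_x^{-1}\big(n(|\hat{v}(n)|^2 - |\hat{v}_0(n)|^2) \hat{v}(n)\big)\Big\|_{L_T^{\infty}H^{-s}} \lesssim \|v\|_{L_T^{\infty}H^s}^3\] and \[\Big\|\mathcal F_x^{-1}\Big(n \sum_{\mathcal N_n} \hat{v}(n_1)\hat{v}(n_2)\hat{v}(n_3)\Big)\Big\|_{L_T^{\infty}H^{-s}} \lesssim \|v\|_{L_T^{\infty}H^s}^3.\]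
   Context: $\mathbb T=\mathbb R/2\pi\mathbb Z$; $\beta\ge0$, $\gamma\in\mathbb R$, $\mu=\pm1$; $v$ is real-valued and $\hat v(n)$ denotes its spatial Fourier coefficient at $n\in\mathbb Z$. $p(n)=n^5+\beta n^3-(\gamma+\frac{\mu}{2\pi}\|v_0\|_{L^2}^2)n-\frac{\mu n}{(2\pi)^2}|\hat v_0(n)|^2$, and $\mathcal N_n=\{(n_1,n_2,n_3)\in\mathbb Z^3: n_1+n_2+n_3=n,\ (n_1+n_2)(n_2+n_3)(n_3+n_1)\ne0\}$. $L^\infty_TH^{\sigma}$ denotes $L^\infty([0,T];H^\sigma(\mathbb T))$. $A\lesssim B$ means $A\le CB$ for a constant $C>0$. *)

(* Defs.v *)
From Stdlib Require Import Reals ZArith.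
From Coquelicot Require Import Coquelicot.
Open Scope R_scope.

(* A (generalized) function on the torus T = R/2piZ is represented by its
   sequence of Fourier coefficients  a : Z -> C, with the convention
   a n = \int_0^{2pi} f(x) e^{-inx} dx  (so f = (1/2pi) sum_n a n e^{inx}). *)

Definition zsumR (f : Z -> R) : R :=
  Series (fun k => f (Z.of_nat k)) + Series (fun k => f (- Z.of_nat (S k))%Z).

Definition zsumR_ex (f : Z -> R) : Prop :=
  ex_series (fun k => f (Z.of_nat k)) /\ ex_series (fun k => f (- Z.of_nat (S k))%Z).

Definition zsumC (f : Z -> C) : C :=
  (zsumR (fun n => Re (f n)), zsumR (fun n => Im (f n))).

(* Japanese bracket weight <n>^{2s} = (1+n^2)^s. *)
Definition jbr2 (s : R) (n : Z) : R := Rpower (1 + (IZR n) ^ 2) s.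

(* Squared H^s norm (up to the harmless constant 1/(2pi) of Parseval). *)
Definition Hs_sq (s : R) (a : Z -> C) : R :=
  zsumR (fun n => jbr2 s n * (Cmod (a n)) ^ 2).

Definition in_Hs (s : R) (a : Z -> C) : Prop :=
  zsumR_ex (fun n => jbr2 s n * (Cmod (a n)) ^ 2).

Definition Hs_norm (s : R) (a : Z -> C) : R := sqrt (Hs_sq s a).

(* Real-valuedness of the function: conjugate symmetry of the coefficients. *)
Definition real_valued (a : Z -> C) : Prop :=
  forall n : Z, a (- n)%Z = Cconj (a n).

(* Squared L^2 norm via Parseval, with the above Fourier convention. *)
Definition L2_sq (a : Z -> C) : R :=
  / (2 * PI) * zsumR (fun n => (Cmod (a n)) ^ 2).

Definition psym (beta gamma mu : R) (v0 : Z -> C) (n : Z) : R :=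
  (IZR n) ^ 5 + beta * (IZR n) ^ 3
  - (gamma + mu / (2 * PI) * L2_sq v0) * IZR n
  - mu * IZR n / (2 * PI) ^ 2 * (Cmod (v0 n)) ^ 2.

(* Nonresonant set N_n: n1+n2+n3 = n with (n1+n2)(n2+n3)(n3+n1) <> 0,
   parametrised by (n1, n2), n3 = n - n1 - n2. *)
(* sum_{N_n} a(n1) a(n2) a(n3)  (absolutely convergent for a in H^s, s > 1/2). *)
Definition nonres_sum (a : Z -> C) (n : Z) : C :=
  zsumC (fun n1 => zsumC (fun n2 =>
    if Z.eq_dec ((n1 + n2) * (n2 + (n - n1 - n2)) * ((n - n1 - n2) + n1)) 0
    then RtoC 0
    else (a n1 * a n2 * a (n - n1 - n2)%Z)%C)).

Definition res_term (a a0 : Z -> C) (n : Z) : C :=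
  (RtoC (IZR n * ((Cmod (a n)) ^ 2 - (Cmod (a0 n)) ^ 2)) * a n)%C.

Definition nonres_term (a : Z -> C) (n : Z) : C :=
  (RtoC (IZR n) * nonres_sum a n)%C.

Definition cont_Hs (s T : R) (v : R -> Z -> C) : Prop :=
  (forall t, 0 <= t <= T -> in_Hs s (v t) /\ real_valued (v t)) /\
  forall t0, 0 <= t0 <= T -> forall eps, 0 < eps -> exists delta, 0 < delta /\
    forall t, 0 <= t <= T -> Rabs (t - t0) < delta ->
      Hs_norm s (fun n => (v t n - v t0 n)%C) < eps.

(* v solves the Fourier-side equation on (0,T) (coefficientwise derivative),
   with datum v0 = v(0). *)
Definition solves (beta gamma mu T : R) (v : R -> Z -> C) : Prop :=
  forall n : Z, forall t, 0 < t < T ->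
    is_derive (fun tau => v tau n) t
      (Ci * RtoC (psym beta gamma mu (v 0) n) * v t n
       - RtoC (mu / (2 * PI) ^ 2) * Ci * res_term (v t) (v 0) n
       + RtoC (mu / (3 * (2 * PI) ^ 2)) * Ci * nonres_term (v t) n)%C.

(* Main.v *)
Require Import Defs.
From Stdlib Require Import Reals ZArith Lra Lia.
From Coquelicot Require Import Coquelicot.
Open Scope R_scope.


Lemma ser_cv a : ex_series a -> Un_cv (sum_f_R0 a) (Series a).
Proof. intro H. apply Series_correct in H. apply is_series_Reals in H. exact H. Qed.

Lemma ser_of_cv a l : Un_cv (sum_f_R0 a) l -> ex_series a /\ Series a = l.
Proof. intro H. assert (is_series a l) by (apply is_series_Reals; exact H).
  split. exists l; auto. apply is_series_unique; auto. Qed.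

Lemma ser_bound a B : (forall n, 0 <= a n) -> (forall N, sum_f_R0 a N <= B) ->
  ex_series a /\ Series a <= B.
Proof. intros H0 HB.
  destruct (growing_cv (sum_f_R0 a)) as [l Hl].
  - intro n. simpl. specialize (H0 (S n)). lra.
  - exists B. intros x [n ->]. apply HB.
  - destruct (ser_of_cv a l Hl) as [He Hs]. split; auto. rewrite Hs.
    apply Rnot_lt_le; intro Hlt.
    destruct (Hl (l - B)) as [N HN]; [lra|].
    specialize (HN N (le_n _)). specialize (HB N). unfold Rdist in HN.
    apply Rabs_def2 in HN. lra.
Qed.

Lemma ser_partial a N : (forall n, 0 <= a n) -> ex_series a -> sum_f_R0 a N <= Series a.
Proof. intros H0 He. apply sum_incr; auto. apply ser_cv; auto. Qed.

Lemma sum_term a j N : (forall n, 0 <= a n) -> (j <= N)%nat -> a j <= sum_f_R0 a N.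
Proof. intros H0 H. induction N.
  - inversion H; simpl; lra.
  - inversion H; subst. simpl. pose proof (cond_pos_sum a N H0). lra.
    simpl. specialize (IHN H2). specialize (H0 (S N)). lra.
Qed.

Definition ZS (g : Z -> R) (N : nat) : R :=
  sum_f_R0 (fun k => g (Z.of_nat k)) N + sum_f_R0 (fun k => g (- Z.of_nat (S k))%Z) N.

Lemma zs_bound g B : (forall n, 0 <= g n) -> (forall N, ZS g N <= B) ->
  zsumR_ex g /\ zsumR g <= B.
Proof. intros H0 HB. unfold ZS in HB.
  assert (P1 : forall N, 0 <= sum_f_R0 (fun k => g (Z.of_nat k)) N) by (intro; apply cond_pos_sum; auto).
  assert (P2 : forall N, 0 <= sum_f_R0 (fun k => g (- Z.of_nat (S k))%Z) N) by (intro; apply cond_pos_sum; auto).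
  destruct (ser_bound (fun k => g (Z.of_nat k)) B) as [E1 _]; auto.
  { intro N. specialize (HB N). specialize (P2 N). lra. }
  destruct (ser_bound (fun k => g (- Z.of_nat (S k))%Z) B) as [E2 _]; auto.
  { intro N. specialize (HB N). specialize (P1 N). lra. }
  split. split; auto. unfold zsumR.
  pose proof (ser_cv _ E1) as C1. pose proof (ser_cv _ E2) as C2.
  apply Rnot_lt_le; intro Hlt.
  set (e := Series (fun k => g (Z.of_nat k)) + Series (fun k => g (- Z.of_nat (S k))%Z) - B).
  assert (He : e > 0) by (unfold e; lra).
  destruct (C1 (e/2)) as [N1 HN1]; [lra|]. destruct (C2 (e/2)) as [N2 HN2]; [lra|].
  specialize (HN1 (max N1 N2) (Nat.le_max_l _ _)). specialize (HN2 (max N1 N2) (Nat.le_max_r _ _)).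
  specialize (HB (max N1 N2)). unfold Rdist in *.
  apply Rabs_def2 in HN1. apply Rabs_def2 in HN2. unfold e in *; lra.
Qed.

Lemma zs_partial g N : (forall n, 0 <= g n) -> zsumR_ex g -> ZS g N <= zsumR g.
Proof. intros H0 [E1 E2]. unfold ZS, zsumR.
  pose proof (ser_partial (fun k => g (Z.of_nat k)) N (fun n => H0 _) E1).
  pose proof (ser_partial (fun k => g (- Z.of_nat (S k))%Z) N (fun n => H0 _) E2). lra. Qed.


Lemma zs_ext f g : (forall n, f n = g n) -> zsumR_ex f -> zsumR_ex g /\ zsumR f = zsumR g.
Proof. intros H [E1 E2]. split. split.
  eapply ex_series_ext; [|exact E1]; intro n; apply H.
  eapply ex_series_ext; [|exact E2]; intro n; apply H.
  unfold zsumR. f_equal; apply Series_ext; intro; apply H. Qed.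

Lemma zs_ext2 f g : (forall n, f n = g n) -> zsumR_ex f -> zsumR_ex g /\ zsumR g = zsumR f.
Proof. intros H E. destruct (zs_ext f g H E). split; auto. Qed.

Lemma zs_ext' f g : (forall n, f n = g n) -> zsumR f = zsumR g.
Proof. intros H. unfold zsumR. f_equal; apply Series_ext; intro; apply H. Qed.

Lemma normR (x : R) : norm x = Rabs x.
Proof. reflexivity. Qed.

Lemma zs_le f g : (forall n, 0 <= f n <= g n) -> zsumR_ex g -> zsumR_ex f /\ zsumR f <= zsumR g.
Proof. intros H [E1 E2].
  assert (E1' : ex_series (fun k => f (Z.of_nat k))).
  { apply (@ex_series_le R_AbsRing R_CompleteNormedModule) with (2 := E1). intro n. specialize (H (Z.of_nat n)).
    rewrite normR; rewrite Rabs_pos_eq; lra. }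
  assert (E2' : ex_series (fun k => f (- Z.of_nat (S k))%Z)).
  { apply (@ex_series_le R_AbsRing R_CompleteNormedModule) with (2 := E2). intro n. specialize (H (- Z.of_nat (S n))%Z).
    rewrite normR; rewrite Rabs_pos_eq; lra. }
  split. split; auto. unfold zsumR.
  pose proof (Series_le (fun k => f (Z.of_nat k)) _ (fun n => H _) E1).
  pose proof (Series_le (fun k => f (- Z.of_nat (S k))%Z) _ (fun n => H _) E2). lra. Qed.

Lemma zs_nonneg g : (forall n, 0 <= g n) -> zsumR_ex g -> 0 <= zsumR g.
Proof. intros H E. pose proof (zs_partial g 0 H E). unfold ZS in H0. simpl in H0.
  pose proof (H 0%Z). pose proof (H (-1)%Z). simpl in *. lra. Qed.

Lemma zs_plus f g : zsumR_ex f -> zsumR_ex g ->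
  zsumR_ex (fun n => f n + g n) /\ zsumR (fun n => f n + g n) = zsumR f + zsumR g.
Proof. intros [E1 E2] [F1 F2]. split. split.
  apply (ex_series_plus _ _ E1 F1). apply (ex_series_plus _ _ E2 F2).
  unfold zsumR. rewrite (Series_plus _ _ E1 F1). rewrite (Series_plus _ _ E2 F2). ring. Qed.

Lemma zs_scal c f : zsumR_ex f ->
  zsumR_ex (fun n => c * f n) /\ zsumR (fun n => c * f n) = c * zsumR f.
Proof. intros [E1 E2]. split. split.
  apply (ex_series_scal_l c _ E1). apply (ex_series_scal_l c _ E2).
  unfold zsumR. rewrite !Series_scal_l. ring. Qed.

Lemma zs_term g k : (forall n, 0 <= g n) -> zsumR_ex g -> g k <= zsumR g.
Proof. intros H E. pose proof (zs_partial g (Z.to_nat (Z.abs k)) H E).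
  unfold ZS in H0.
  pose proof (cond_pos_sum (fun k => g (Z.of_nat k)) (Z.to_nat (Z.abs k)) (fun n => H _)).
  pose proof (cond_pos_sum (fun k => g (- Z.of_nat (S k))%Z) (Z.to_nat (Z.abs k)) (fun n => H _)).
  destruct (Z_le_gt_dec 0 k).
  - pose proof (sum_term (fun k => g (Z.of_nat k)) (Z.to_nat k) (Z.to_nat (Z.abs k)) (fun n => H _) ltac:(lia)).
    cbv beta in H3. rewrite Z2Nat.id in H3 by lia. lra.
  - pose proof (sum_term (fun k => g (- Z.of_nat (S k))%Z) (Z.to_nat (- k - 1)) (Z.to_nat (Z.abs k)) (fun n => H _) ltac:(lia)).
    cbv beta in H3. replace (- Z.of_nat (S (Z.to_nat (- k - 1))))%Z with k in H3 by lia. lra.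
Qed.

Lemma zs_shift1p g : zsumR_ex g -> zsumR_ex (fun n => g (n + 1)%Z) /\ zsumR (fun n => g (n+1)%Z) = zsumR g.
Proof. intros [E1 E2].
  assert (A1 : ex_series (fun k => g (Z.of_nat k + 1)%Z)).
  { apply ex_series_incr_1 in E1. eapply ex_series_ext; [|exact E1]. intro n. cbv beta. f_equal. lia. }
  assert (A2 : ex_series (fun k => g (- Z.of_nat (S k) + 1)%Z)).
  { apply ex_series_incr_1. eapply ex_series_ext; [|exact E2]. intro n. cbv beta. f_equal. lia. }
  split. split; auto. unfold zsumR.
  rewrite (Series_incr_1 _ E1). rewrite (Series_incr_1 _ A2).
  rewrite (Series_ext (fun k => g (Z.of_nat k + 1)%Z) (fun k => g (Z.of_nat (S k)))) by (intro; cbv beta; f_equal; lia).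
  rewrite (Series_ext (fun k => g (- Z.of_nat (S (S k)) + 1)%Z) (fun k => g (- Z.of_nat (S k))%Z)) by (intro; cbv beta; f_equal; lia).
  simpl. ring. Qed.

Lemma zs_shift1m g : zsumR_ex g -> zsumR_ex (fun n => g (n - 1)%Z) /\ zsumR (fun n => g (n-1)%Z) = zsumR g.
Proof. intros [E1 E2].
  assert (A1 : ex_series (fun k => g (Z.of_nat k - 1)%Z)).
  { apply ex_series_incr_1. eapply ex_series_ext; [|exact E1]. intro n. cbv beta. f_equal. lia. }
  assert (A2 : ex_series (fun k => g (- Z.of_nat (S k) - 1)%Z)).
  { apply ex_series_incr_1 in E2. eapply ex_series_ext; [|exact E2]. intro n. cbv beta. f_equal. lia. }
  split. split; auto. unfold zsumR.
  rewrite (Series_incr_1 _ A1). rewrite (Series_incr_1 _ E2).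
  rewrite (Series_ext (fun k => g (Z.of_nat (S k) - 1)%Z) (fun k => g (Z.of_nat k))) by (intro; cbv beta; f_equal; lia).
  rewrite (Series_ext (fun k => g (- Z.of_nat (S k) - 1)%Z) (fun k => g (- Z.of_nat (S (S k)))%Z)) by (intro; cbv beta; f_equal; lia).
  simpl. ring. Qed.

Lemma zs_shift g k : zsumR_ex g -> zsumR_ex (fun n => g (n + k)%Z) /\ zsumR (fun n => g (n+k)%Z) = zsumR g.
Proof. intro E.
  assert (P : forall j : nat, zsumR_ex (fun n => g (n + Z.of_nat j)%Z) /\ zsumR (fun n => g (n + Z.of_nat j)%Z) = zsumR g).
  { induction j.
    - apply zs_ext2; auto. intro; cbv beta; f_equal; lia.
    - destruct IHj as [E' V']. destruct (zs_shift1p _ E') as [E'' V''].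
      rewrite <- V', <- V''. apply zs_ext2; auto. intro. cbv beta. f_equal. lia. }
  assert (Q : forall j : nat, zsumR_ex (fun n => g (n - Z.of_nat j)%Z) /\ zsumR (fun n => g (n - Z.of_nat j)%Z) = zsumR g).
  { induction j.
    - apply zs_ext2; auto. intro; cbv beta; f_equal; lia.
    - destruct IHj as [E' V']. destruct (zs_shift1m _ E') as [E'' V''].
      rewrite <- V', <- V''. apply zs_ext2; auto. intro. cbv beta. f_equal. lia. }
  destruct (Z_le_gt_dec 0 k).
  - destruct (P (Z.to_nat k)) as [E' V']. rewrite <- V'. apply zs_ext2; auto. intro; cbv beta; f_equal; lia.
  - destruct (Q (Z.to_nat (-k))) as [E' V']. rewrite <- V'. apply zs_ext2; auto. intro; cbv beta; f_equal; lia.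
Qed.

Lemma zs_refl g : zsumR_ex g -> zsumR_ex (fun n => g (- n)%Z) /\ zsumR (fun n => g (- n)%Z) = zsumR g.
Proof. intros [E1 E2].
  assert (A1 : ex_series (fun k => g (- Z.of_nat k)%Z)).
  { apply ex_series_incr_1. eapply ex_series_ext; [|exact E2]. intro n. cbv beta. f_equal. }
  assert (A2 : ex_series (fun k => g (- - Z.of_nat (S k))%Z)).
  { apply ex_series_incr_1 in E1. eapply ex_series_ext; [|exact E1]. intro n. cbv beta. f_equal. }
  split. split; auto. unfold zsumR.
  rewrite (Series_incr_1 _ A1). rewrite (Series_incr_1 _ E1).
  rewrite (Series_ext (fun k => g (- - Z.of_nat (S k))%Z) (fun k => g (Z.of_nat (S k)))) by (intro; cbv beta; f_equal; lia).
  simpl. ring. Qed.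

Lemma zs_rs g m : zsumR_ex g -> zsumR_ex (fun k => g (m - k)%Z) /\ zsumR (fun k => g (m - k)%Z) = zsumR g.
Proof. intro E. destruct (zs_shift g m E) as [E1 V1].
  destruct (zs_refl _ E1) as [E2 V2]. rewrite <- V1, <- V2. apply zs_ext2; auto.
  intro; cbv beta; f_equal; lia. Qed.

Lemma zs_finsum (H : nat -> Z -> R) N : (forall i, zsumR_ex (H i)) ->
  zsumR_ex (fun k => sum_f_R0 (fun i => H i k) N) /\
  zsumR (fun k => sum_f_R0 (fun i => H i k) N) = sum_f_R0 (fun i => zsumR (H i)) N.
Proof. intro E. induction N.
  - simpl. split; [apply (E 0%nat)|]. reflexivity.
  - destruct IHN as [E' V']. destruct (zs_plus _ _ E' (E (S N))) as [E'' V''].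
    simpl. split; auto. rewrite V'', V'. reflexivity. Qed.

Lemma ZS_swap (h : Z -> Z -> R) N : (forall n, zsumR_ex (h n)) ->
  zsumR_ex (fun k => ZS (fun n => h n k) N) /\
  zsumR (fun k => ZS (fun n => h n k) N) = ZS (fun n => zsumR (h n)) N.
Proof. intro E. unfold ZS.
  destruct (zs_finsum (fun i => h (Z.of_nat i)) N (fun i => E _)) as [E1 V1].
  destruct (zs_finsum (fun i => h (- Z.of_nat (S i))%Z) N (fun i => E _)) as [E2 V2].
  destruct (zs_plus _ _ E1 E2) as [E3 V3]. split; auto. rewrite V3, V1, V2. reflexivity. Qed.

Lemma ZS_nonneg g N : (forall n, 0 <= g n) -> 0 <= ZS g N.
Proof. intro H. unfold ZS. pose proof (cond_pos_sum (fun k => g (Z.of_nat k)) N (fun n => H _)).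
  pose proof (cond_pos_sum (fun k => g (- Z.of_nat (S k))%Z) N (fun n => H _)). lra. Qed.

Lemma ZS_le f g N : (forall n, f n <= g n) -> ZS f N <= ZS g N.
Proof. intro H. unfold ZS. pose proof (sum_growing (fun k => f (Z.of_nat k)) (fun k => g (Z.of_nat k)) N (fun n => H _)).
  pose proof (sum_growing (fun k => f (- Z.of_nat (S k))%Z) (fun k => g (- Z.of_nat (S k))%Z) N (fun n => H _)). lra. Qed.

Lemma zs_cs (x y : Z -> R) : (forall n, 0 <= x n) -> (forall n, 0 <= y n) ->
  zsumR_ex (fun n => x n ^ 2) -> zsumR_ex (fun n => y n ^ 2) ->
  zsumR_ex (fun n => x n * y n) /\
  (zsumR (fun n => x n * y n)) ^ 2 <= zsumR (fun n => x n ^ 2) * zsumR (fun n => y n ^ 2).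
Proof. intros Hx Hy EX EY.
  set (X := zsumR (fun n => x n ^ 2)). set (Y := zsumR (fun n => y n ^ 2)).
  assert (X0 : 0 <= X) by (apply zs_nonneg; auto; intro; apply pow2_ge_0).
  assert (Y0 : 0 <= Y) by (apply zs_nonneg; auto; intro; apply pow2_ge_0).
  assert (EXY : zsumR_ex (fun n => x n * y n)).
  { destruct (zs_plus _ _ EX EY) as [E _].
    destruct (zs_scal (/2) _ E) as [E' _].
    refine (proj1 (zs_le (fun n => x n * y n) _ _ E')).
    intro n. split. apply Rmult_le_pos; auto.
    pose proof (pow2_ge_0 (x n - y n)). specialize (Hx n). specialize (Hy n). nra. }
  split; auto.
  set (S := zsumR (fun n => x n * y n)).
  assert (S0 : 0 <= S) by (apply zs_nonneg; auto; intro; apply Rmult_le_pos; auto).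
  assert (Inner : forall k, x k * y k * S <= Y / 2 * x k ^ 2 + X / 2 * y k ^ 2).
  { intro k. destruct (zs_scal (x k * y k) _ EXY) as [_ V]. unfold S. rewrite <- V.
    destruct (zs_scal (x k ^ 2 / 2) _ EY) as [E1 V1].
    destruct (zs_scal (y k ^ 2 / 2) _ EX) as [E2 V2].
    destruct (zs_plus _ _ E1 E2) as [E3 V3].
    apply Rle_trans with (zsumR (fun n => x k ^ 2 / 2 * y n ^ 2 + y k ^ 2 / 2 * x n ^ 2)).
    2:{ rewrite V3, V1, V2. unfold X, Y. lra. }
    apply zs_le; auto. intro n. split.
    - apply Rmult_le_pos; [apply Rmult_le_pos|]; auto; apply Rmult_le_pos; auto.
    - pose proof (pow2_ge_0 (x k * y n - x n * y k)). nra. }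
  destruct (zs_scal (Y/2) _ EX) as [E1 V1].
  destruct (zs_scal (X/2) _ EY) as [E2 V2].
  destruct (zs_plus _ _ E1 E2) as [E3 V3].
  destruct (zs_scal S _ EXY) as [_ V4].
  replace (S ^ 2) with (S * S) by ring. unfold S at 2. rewrite <- V4.
  apply Rle_trans with (zsumR (fun n => Y / 2 * x n ^ 2 + X / 2 * y n ^ 2)).
  2:{ rewrite V3, V1, V2. fold X Y. lra. }
  apply zs_le; auto. intro n. split.
  - apply Rmult_le_pos; auto. apply Rmult_le_pos; auto.
  - rewrite Rmult_comm. apply Inner.
Qed.

Definition conv (f g : Z -> R) (n : Z) : R := zsumR (fun k => f k * g (n - k)%Z).

Lemma conv_ex f g n B : (forall k, 0 <= f k) -> (forall k, 0 <= g k <= B) -> zsumR_ex f ->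
  zsumR_ex (fun k => f k * g (n - k)%Z) /\ 0 <= conv f g n /\ conv f g n <= B * zsumR f.
Proof. intros Hf Hg E. destruct (zs_scal B _ E) as [E' V'].
  destruct (zs_le (fun k => f k * g (n - k)%Z) (fun k => B * f k)) as [E1 V1]; [|exact E'|].
  { intro k. specialize (Hg (n - k)%Z). specialize (Hf k). split. apply Rmult_le_pos; lra. nra. }
  split; auto. split. apply zs_nonneg; auto. intro k. specialize (Hg (n - k)%Z). specialize (Hf k). apply Rmult_le_pos; lra.
  unfold conv. lra. Qed.

Lemma conv_l1 f g : (forall k, 0 <= f k) -> (forall k, 0 <= g k) -> zsumR_ex f -> zsumR_ex g ->
  zsumR_ex (conv f g) /\ zsumR (conv f g) <= zsumR f * zsumR g.
Proof. intros Hf Hg Ef Eg. set (G := zsumR g).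
  assert (Hg' : forall k, 0 <= g k <= G) by (intro k; split; auto; apply zs_term; auto).
  apply zs_bound.
  - intro n. apply (conv_ex f g n G); auto.
  - intro N. unfold conv.
    destruct (ZS_swap (fun n k => f k * g (n - k)%Z) N) as [E V].
    { intro n. apply (conv_ex f g n G); auto. }
    rewrite <- V.
    destruct (zs_scal G _ Ef) as [E2 V2]. rewrite Rmult_comm. rewrite <- V2.
    apply zs_le; auto. intro k. split. apply ZS_nonneg. intro n. apply Rmult_le_pos; auto.
    destruct (zs_shift g (- k) Eg) as [E3 V3].
    destruct (zs_scal (f k) _ E3) as [E4 V4].
    apply Rle_trans with (zsumR (fun n => f k * g (n + - k)%Z)).
    + apply Rle_trans with (ZS (fun n => f k * g (n + - k)%Z) N).
      * apply ZS_le. intro n. replace (n - k)%Z with (n + - k)%Z by lia. lra.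
      * apply zs_partial; auto. intro n. apply Rmult_le_pos; auto.
    + rewrite V4, V3. fold G. lra.
Qed.

Lemma young f X : (forall k, 0 <= f k) -> (forall k, 0 <= X k) -> zsumR_ex f ->
  zsumR_ex (fun k => X k ^ 2) ->
  zsumR_ex (fun n => conv f X n ^ 2) /\
  zsumR (fun n => conv f X n ^ 2) <= zsumR f ^ 2 * zsumR (fun k => X k ^ 2).
Proof. intros Hf HX Ef EX. set (F := zsumR f). set (Q := zsumR (fun k => X k ^ 2)).
  assert (HQ : forall j, 0 <= X j ^ 2 <= Q).
  { intro j. split. apply pow2_ge_0. apply (zs_term (fun k => X k ^ 2)); auto. intro; apply pow2_ge_0. }
  assert (HXb : forall j, 0 <= X j <= (1 + Q) / 2).
  { intro j. split; auto. specialize (HQ j). pose proof (pow2_ge_0 (X j - 1)). nra. }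
  assert (F0 : 0 <= F) by (apply zs_nonneg; auto).
  assert (Pt : forall n, conv f X n ^ 2 <= F * conv f (fun k => X k ^ 2) n).
  { intro n.
    destruct (conv_ex f (fun k => X k ^ 2) n Q Hf HQ Ef) as [Ey _].
    destruct (zs_cs (fun k => sqrt (f k)) (fun k => sqrt (f k) * X (n - k)%Z)) as [_ C].
    - intro; apply sqrt_pos.
    - intro; apply Rmult_le_pos; auto. apply sqrt_pos.
    - apply (zs_ext2 f); auto. intro k. rewrite pow2_sqrt; auto.
    - apply (zs_ext2 (fun k => f k * X (n - k)%Z ^ 2)); auto. intro k.
      rewrite Rpow_mult_distr, pow2_sqrt; auto.
    - unfold conv.
      rewrite (zs_ext' (fun k => f k * X (n - k)%Z) (fun k => sqrt (f k) * (sqrt (f k) * X (n - k)%Z))).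
      2:{ intro k. rewrite <- Rmult_assoc, sqrt_sqrt; auto. }
      eapply Rle_trans; [exact C|]. apply Req_le.
      f_equal. apply zs_ext'. intro k. rewrite pow2_sqrt; auto.
      apply zs_ext'. intro k. rewrite Rpow_mult_distr, pow2_sqrt; auto. }
  destruct (conv_l1 f (fun k => X k ^ 2) Hf (fun k => proj1 (HQ k)) Ef EX) as [E1 V1].
  destruct (zs_scal F _ E1) as [E2 V2].
  destruct (zs_le (fun n => conv f X n ^ 2) (fun n => F * conv f (fun k => X k ^ 2) n)) as [E3 V3]; auto.
  { intro n. split. apply pow2_ge_0. apply Pt. }
  split; auto. eapply Rle_trans; [exact V3|]. rewrite V2. fold Q in V1. fold F in V1.
  replace (F ^ 2 * Q) with (F * (F * Q)) by ring. apply Rmult_le_compat_l; auto.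
Qed.

Lemma conv_comm f g n : zsumR_ex (fun k => f k * g (n - k)%Z) ->
  zsumR_ex (fun k => g k * f (n - k)%Z) /\ conv g f n = conv f g n.
Proof. intro E. destruct (zs_rs _ n E) as [E1 V1]. unfold conv. rewrite <- V1.
  apply zs_ext2; auto. intro k. cbv beta. replace (n - (n - k))%Z with k by lia. ring. Qed.

Lemma conv_mono f g h n : (forall k, 0 <= f k) -> (forall j, 0 <= g j <= h j) ->
  zsumR_ex (fun k => f k * h (n - k)%Z) ->
  zsumR_ex (fun k => f k * g (n - k)%Z) /\ conv f g n <= conv f h n.
Proof. intros Hf Hg E. apply zs_le; auto. intro k. specialize (Hf k). specialize (Hg (n - k)%Z).
  split; [apply Rmult_le_pos|apply Rmult_le_compat_l]; lra. Qed.

Lemma zs_abs_ex f g : (forall n, Rabs (f n) <= g n) -> zsumR_ex g -> zsumR_ex f.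
Proof. intros H [E1 E2]. split.
  apply (@ex_series_le R_AbsRing R_CompleteNormedModule) with (2 := E1). intro n. rewrite normR. apply H.
  apply (@ex_series_le R_AbsRing R_CompleteNormedModule) with (2 := E2). intro n. rewrite normR. apply H.
Qed.

Lemma zs_cv g : zsumR_ex g -> Un_cv (ZS g) (zsumR g).
Proof. intros [E1 E2]. unfold ZS, zsumR. apply CV_plus; apply ser_cv; auto. Qed.

Lemma fin_tri (a b c : nat -> R) N : (forall k, sqrt (a k ^ 2 + b k ^ 2) <= c k) ->
  sqrt (sum_f_R0 a N ^ 2 + sum_f_R0 b N ^ 2) <= sum_f_R0 c N.
Proof. intro H. induction N.
  - simpl. apply H.
  - simpl. eapply Rle_trans; [|apply Rplus_le_compat; [exact IHN|apply H]].
    pose proof (Cmod_triangle (sum_f_R0 a N, sum_f_R0 b N) (a (S N), b (S N))).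
    unfold Cmod in H0. simpl in H0. simpl. exact H0.
Qed.

Lemma im_le_Cmod' (c : C) : Rabs (Im c) <= Cmod c.
Proof. rewrite <- sqrt_Rsqr_abs. unfold Rsqr, Cmod. apply sqrt_le_1_alt.
  unfold Im. pose proof (pow2_ge_0 (fst c)). nra. Qed.

Lemma cmod_zsumC f : zsumR_ex (fun n => Cmod (f n)) -> Cmod (zsumC f) <= zsumR (fun n => Cmod (f n)).
Proof. intro E.
  assert (Er : zsumR_ex (fun n => Re (f n))) by (apply (zs_abs_ex _ _ (fun n => re_le_Cmod _) E)).
  assert (Ei : zsumR_ex (fun n => Im (f n))) by (apply (zs_abs_ex _ _ (fun n => im_le_Cmod' _) E)).
  set (Z := zsumR (fun n => Cmod (f n))).
  assert (Z0 : 0 <= Z) by (apply zs_nonneg; auto; intro; apply Cmod_ge_0).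
  set (zr := zsumR (fun n => Re (f n))). set (zi := zsumR (fun n => Im (f n))).
  assert (L : zr * zr + zi * zi <= Z * Z).
  { apply (Rle_cv_lim (Un := fun N => ZS (fun n => Re (f n)) N * ZS (fun n => Re (f n)) N + ZS (fun n => Im (f n)) N * ZS (fun n => Im (f n)) N)
         (Vn := fun _ => Z * Z)).
    - intro N. assert (T : sqrt (ZS (fun n => Re (f n)) N ^ 2 + ZS (fun n => Im (f n)) N ^ 2) <= ZS (fun n => Cmod (f n)) N).
      { unfold ZS. eapply Rle_trans; [|apply Rplus_le_compat; apply fin_tri; intro k; apply Rle_refl].
        pose proof (Cmod_triangle (sum_f_R0 (fun k => Re (f (Z.of_nat k))) N, sum_f_R0 (fun k => Im (f (Z.of_nat k))) N)
             (sum_f_R0 (fun k => Re (f (- Z.of_nat (S k))%Z)) N, sum_f_R0 (fun k => Im (f (- Z.of_nat (S k))%Z)) N)).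
        unfold Cmod in H. simpl in H. exact H. }
      assert (T2 : ZS (fun n => Cmod (f n)) N <= Z) by (apply zs_partial; auto; intro; apply Cmod_ge_0).
      set (u := ZS (fun n => Re (f n)) N ^ 2 + ZS (fun n => Im (f n)) N ^ 2) in T.
      assert (U0 : 0 <= u) by (unfold u; pose proof (pow2_ge_0 (ZS (fun n => Re (f n)) N)); pose proof (pow2_ge_0 (ZS (fun n => Im (f n)) N)); lra).
      pose proof (sqrt_sqrt u U0). pose proof (sqrt_pos u).
      assert (sqrt u * sqrt u <= Z * Z) by (apply Rmult_le_compat; lra).
      rewrite (sqrt_sqrt u U0) in H1. unfold u in H1. nra.
    - apply CV_plus; apply CV_mult; apply zs_cv; auto.
    - intros e He. exists 0%nat. intros. unfold Rdist. rewrite Rminus_eq_0, Rabs_R0. lra. }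
  unfold Cmod, zsumC. simpl. fold zr zi.
  rewrite <- (sqrt_pow2 Z Z0). apply sqrt_le_1_alt. simpl. lra.
Qed.

Lemma exp_mono x y : x <= y -> exp x <= exp y.
Proof. intro H. destruct (Rle_lt_or_eq_dec _ _ H). left; apply exp_increasing; auto. subst; lra. Qed.

Lemma ln_le_xm1 x : 0 < x -> ln x <= x - 1.
Proof. intro H. pose proof (exp_ineq1_le (ln x)). rewrite exp_ln in H0; auto. lra. Qed.

Lemma tel q m : 1 < q -> 2 <= m ->
  Rpower m (- q) <= (Rpower (m - 1) (- (q - 1)) - Rpower m (- (q - 1))) / (q - 1).
Proof. intros Hq Hm. unfold Rpower. set (r := q - 1). assert (r > 0) by (unfold r; lra).
  set (A := exp (- r * ln m)).
  assert (A0 : 0 < A) by apply exp_pos.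
  assert (E1 : exp (- q * ln m) = A * / m).
  { replace (/ m) with (exp (- ln m)) by (rewrite exp_Ropp, exp_ln; lra). unfold A. rewrite <- exp_plus. f_equal. unfold r. ring. }
  assert (E2 : exp (- r * ln (m - 1)) = A * exp (r * (ln m - ln (m - 1)))).
  { unfold A. rewrite <- exp_plus. f_equal. ring. }
  assert (L : ln (m - 1) - ln m <= - / m).
  { replace (ln (m - 1) - ln m) with (ln ((m - 1) * / m)).
    - eapply Rle_trans. apply ln_le_xm1. apply Rmult_lt_0_compat; [lra|apply Rinv_0_lt_compat; lra].
      apply Req_le. field. lra.
    - rewrite ln_mult, ln_Rinv; try lra. apply Rinv_0_lt_compat; lra. }
  pose proof (exp_ineq1_le (r * (ln m - ln (m - 1)))).
  rewrite E1, E2.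
  assert (r * / m <= r * (ln m - ln (m - 1))) by (apply Rmult_le_compat_l; lra).
  assert (A * (r * / m) <= A * (1 + r * (ln m - ln (m - 1)) - 1)) by (apply Rmult_le_compat_l; lra).
  assert (K : A * / m * r <= A * exp (r * (ln m - ln (m - 1))) - A) by nra.
  replace (A * / m) with ((A * / m * r) / r) by (field; lra). unfold Rdiv.
  apply Rmult_le_compat_r. left; apply Rinv_0_lt_compat; lra. exact K.
Qed.

Lemma zeta_nat q N : 1 < q ->
  sum_f_R0 (fun j => Rpower (INR j + 1) (- q)) N <= 1 + (1 - Rpower (INR N + 1) (- (q - 1))) / (q - 1).
Proof. intro Hq. induction N.
  - simpl. replace (0 + 1) with 1 by ring. unfold Rpower. rewrite ln_1, !Rmult_0_r, exp_0. lra.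
  - rewrite tech5, S_INR.
    pose proof (tel q (INR N + 1 + 1) Hq). replace (INR N + 1 + 1 - 1) with (INR N + 1) in H by ring.
    assert (2 <= INR N + 1 + 1) by (pose proof (pos_INR N); lra). specialize (H H0).
    unfold Rdiv in *. nra.
Qed.

Lemma zeta_nat_bound q N : 1 < q ->
  sum_f_R0 (fun j => Rpower (INR j + 1) (- q)) N <= 1 + 1 / (q - 1).
Proof. intro Hq. eapply Rle_trans. apply zeta_nat; auto.
  assert (0 < Rpower (INR N + 1) (- (q - 1))) by apply exp_pos.
  assert (0 < / (q - 1)) by (apply Rinv_0_lt_compat; lra). unfold Rdiv. nra. Qed.

Lemma Rpower_cmp s x y : 0 <= s -> 1 <= y -> y ^ 2 <= 2 * (1 + x ^ 2) ->
  Rpower (1 + x ^ 2) (- s) <= Rpower 2 s * Rpower y (- (2 * s)).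
Proof. intros Hs Hy Hxy. unfold Rpower. rewrite <- exp_plus. apply exp_mono.
  assert (ln (y ^ 2 / 2) <= ln (1 + x ^ 2)).
  { apply ln_le. apply Rmult_lt_0_compat; [nra|lra]. unfold Rdiv. lra. }
  unfold Rdiv in H. rewrite ln_mult, ln_Rinv in H by (try nra; lra).
  replace (y ^ 2) with (y * y) in H by ring. rewrite ln_mult in H by lra. nra.
Qed.

Definition W (n : Z) : R := 1 + IZR n ^ 2.

Lemma W1 n : 1 <= W n.
Proof. unfold W. pose proof (pow2_ge_0 (IZR n)). lra. Qed.

Lemma zeta s : 1 / 2 < s -> zsumR_ex (fun n => Rpower (W n) (- s)).
Proof. intro Hs. set (B := Rpower 2 s * (1 + 1 / (2 * s - 1))).
  enough (HH : forall N, ZS (fun n => Rpower (W n) (- s)) N <= 2 * B)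
    by exact (proj1 (zs_bound _ _ (fun n => Rlt_le _ _ (exp_pos _)) HH)).
  intro N. unfold ZS.
  assert (Hb : forall j, Rpower (INR j + 1) (- (2 * s)) * Rpower 2 s = Rpower 2 s * Rpower (INR j + 1) (- (2 * s))) by (intro; ring).
  assert (S1 : sum_f_R0 (fun k => Rpower (W (Z.of_nat k)) (- s)) N <= B).
  { eapply Rle_trans. apply (sum_growing _ (fun j => Rpower (INR j + 1) (- (2 * s)) * Rpower 2 s)).
    - intro j. rewrite Hb. unfold W. rewrite <- INR_IZR_INZ. apply Rpower_cmp; try lra.
      pose proof (pos_INR j); lra. pose proof (pos_INR j). pose proof (pow2_ge_0 (INR j - 1)). nra.
    - rewrite <- scal_sum. unfold B. apply Rmult_le_compat_l. left; apply exp_pos.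
      apply zeta_nat_bound. lra. }
  assert (S2 : sum_f_R0 (fun k => Rpower (W (- Z.of_nat (S k))%Z) (- s)) N <= B).
  { eapply Rle_trans. apply (sum_growing _ (fun j => Rpower (INR j + 1) (- (2 * s)) * Rpower 2 s)).
    - intro j. rewrite Hb. unfold W. rewrite opp_IZR, <- INR_IZR_INZ, S_INR. apply Rpower_cmp; try lra.
      pose proof (pos_INR j); lra. pose proof (pos_INR j). nra.
    - rewrite <- scal_sum. unfold B. apply Rmult_le_compat_l. left; apply exp_pos.
      apply zeta_nat_bound. lra. }
  lra.
Qed.

Lemma weight s a b : 0 <= s ->
  Rpower (1 + (a + b) ^ 2) (s / 2) <= Rpower 4 (s / 2) * (Rpower (1 + a ^ 2) (s / 2) + Rpower (1 + b ^ 2) (s / 2)).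
Proof. intro Hs.
  assert (PA : 0 < Rpower (1 + a ^ 2) (s / 2)) by apply exp_pos.
  assert (PB : 0 < Rpower (1 + b ^ 2) (s / 2)) by apply exp_pos.
  assert (P4 : 0 < Rpower 4 (s / 2)) by apply exp_pos.
  pose proof (pow2_ge_0 a). pose proof (pow2_ge_0 b). pose proof (pow2_ge_0 (a - b)).
  destruct (Rle_dec (1 + a ^ 2) (1 + b ^ 2)).
  - eapply Rle_trans. apply (Rle_Rpower_l _ (4 * (1 + b ^ 2))). lra. split. nra. nra.
    rewrite <- Rpower_mult_distr by nra. nra.
  - eapply Rle_trans. apply (Rle_Rpower_l _ (4 * (1 + a ^ 2))). lra. split. nra. nra.
    rewrite <- Rpower_mult_distr by nra. nra.
Qed.

Lemma W0 n : 0 < W n.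
Proof. pose proof (W1 n). lra. Qed.

Lemma Rp_sq s n : Rpower (W n) (s / 2) ^ 2 = Rpower (W n) s.
Proof. simpl. rewrite Rmult_1_r, <- Rpower_plus. f_equal. field. Qed.

Lemma Rp_opp s n : Rpower (W n) (- s) = / Rpower (W n) s.
Proof. apply Rpower_Ropp. Qed.

Lemma Rp_ge1 s n : 0 <= s -> 1 <= Rpower (W n) s.
Proof. intro H. rewrite <- (Rpower_O (W n)) by apply W0. apply Rle_Rpower; auto. apply W1. Qed.

Lemma n2_le s n : 1 / 2 <= s -> IZR n ^ 2 <= Rpower (W n) s ^ 2.
Proof. intro H. simpl. rewrite !Rmult_1_r, <- Rpower_plus.
  apply Rle_trans with (W n). unfold W; simpl; lra.
  rewrite <- (Rpower_1 (W n)) at 1 by apply W0. apply Rle_Rpower. apply W1. lra. Qed.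

Lemma Rp_pos x y : 0 < Rpower x y.
Proof. apply exp_pos. Qed.

Lemma gen_cmod_le f g : (forall n, Cmod (f n) <= g n) -> zsumR_ex g -> Cmod (zsumC f) <= zsumR g.
Proof. intros H E. destruct (zs_le (fun n => Cmod (f n)) g) as [E1 V1]; auto.
  intro n. split. apply Cmod_ge_0. apply H.
  eapply Rle_trans. apply cmod_zsumC; auto. auto. Qed.

Lemma res_est s a b M : 1 / 2 < s -> in_Hs s a -> Hs_sq s a <= M ^ 2 -> Hs_sq s b <= M ^ 2 -> in_Hs s b ->
  in_Hs (- s) (res_term a b) /\ Hs_sq (- s) (res_term a b) <= M ^ 4 * M ^ 2.
Proof. intros Hs Ea Ma Mb Eb.
  assert (Pa : forall n, Rpower (W n) s * Cmod (a n) ^ 2 <= M ^ 2).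
  { intro n. eapply Rle_trans; [|exact Ma]. apply (zs_term (fun n => jbr2 s n * Cmod (a n) ^ 2)); auto.
    intro k. apply Rmult_le_pos. left; apply Rp_pos. apply pow2_ge_0. }
  assert (Pb : forall n, Rpower (W n) s * Cmod (b n) ^ 2 <= M ^ 2).
  { intro n. eapply Rle_trans; [|exact Mb]. apply (zs_term (fun n => jbr2 s n * Cmod (b n) ^ 2)); auto.
    intro k. apply Rmult_le_pos. left; apply Rp_pos. apply pow2_ge_0. }
  destruct (zs_scal (M ^ 4) _ Ea) as [E1 V1].
  unfold in_Hs, Hs_sq. unfold Hs_sq in Ma.
  destruct (zs_le (fun n => jbr2 (- s) n * Cmod (res_term a b n) ^ 2) (fun n => M ^ 4 * (jbr2 s n * Cmod (a n) ^ 2))) as [E2 V2]; auto.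
  2:{ split; auto. rewrite V1 in V2. eapply Rle_trans; [exact V2|]. apply Rmult_le_compat_l; auto.
      replace (M ^ 4) with ((M ^ 2) ^ 2) by ring. apply pow2_ge_0. }
  intro n. change (jbr2 (- s) n) with (Rpower (W n) (- s)). change (jbr2 s n) with (Rpower (W n) s).
  rewrite Rp_opp. unfold res_term. rewrite Cmod_mult, Cmod_R, Rabs_mult.
  set (w := Rpower (W n) s). set (u := Cmod (a n) ^ 2). set (v := Cmod (b n) ^ 2).
  assert (w1 : 1 <= w) by (apply Rp_ge1; lra).
  assert (u0 : 0 <= u) by apply pow2_ge_0. assert (v0 : 0 <= v) by apply pow2_ge_0.
  set (i := / w). assert (i0 : 0 < i) by (apply Rinv_0_lt_compat; lra).
  assert (iw : i * w = 1) by (apply Rinv_l; lra).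
  assert (ui : u <= M ^ 2 * i) by (specialize (Pa n); fold w u in Pa; replace u with (w * u * i) by (transitivity (u * (i * w)); [ring| rewrite iw; ring]); apply Rmult_le_compat_r; lra).
  assert (vi : v <= M ^ 2 * i) by (specialize (Pb n); fold w v in Pb; replace v with (w * v * i) by (transitivity (v * (i * w)); [ring| rewrite iw; ring]); apply Rmult_le_compat_r; lra).
  assert (n2 : IZR n ^ 2 * i ^ 2 <= 1).
  { pose proof (n2_le s n ltac:(lra)). fold w in H. replace 1 with (w ^ 2 * i ^ 2) by (rewrite <- Rpow_mult_distr, Rmult_comm, iw; ring).
    apply Rmult_le_compat_r; auto. apply pow2_ge_0. }
  assert (i1 : i <= 1) by nra.
  assert (d2 : (u - v) ^ 2 <= (M ^ 2 * i) ^ 2) by nra.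
  split. apply Rmult_le_pos. lra. apply pow2_ge_0.
  replace ((Rabs (IZR n) * Rabs (u - v) * Cmod (a n)) ^ 2) with (IZR n ^ 2 * (u - v) ^ 2 * u).
  2:{ unfold u. rewrite !Rpow_mult_distr. rewrite !pow2_abs. ring. }
  assert (IZR n ^ 2 * (u - v) ^ 2 <= IZR n ^ 2 * (M ^ 2 * i) ^ 2) by (apply Rmult_le_compat_l; auto; apply pow2_ge_0).
  assert (IZR n ^ 2 * (M ^ 2 * i) ^ 2 <= M ^ 4) by (replace (IZR n ^ 2 * (M ^ 2 * i) ^ 2) with ((IZR n ^ 2 * i ^ 2) * M ^ 4) by ring;
     pose proof (pow2_ge_0 (M ^ 2)); replace ((M^2)^2) with (M^4) in H0 by ring; nra).
  assert (IZR n ^ 2 * (u - v) ^ 2 <= M ^ 4) by lra.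
  assert (0 <= IZR n ^ 2 * (u - v) ^ 2) by (apply Rmult_le_pos; apply pow2_ge_0).
  assert (i * (IZR n ^ 2 * (u - v) ^ 2 * u) <= i * (M ^ 4 * u)) by (apply Rmult_le_compat_l; nra).
  assert (i * (M ^ 4 * u) <= M ^ 4 * (w * u)).
  { assert (0 <= M ^ 4 * u) by nra. nra. }
  lra.
Qed.

Definition Pw s n := Rpower (W n) (s / 2).
Definition al (a : Z -> C) n := Cmod (a n).
Definition Aw s a n := Pw s n * al a n.
Definition cst s := Rpower 4 (s / 2).

Lemma al0 a n : 0 <= al a n.
Proof. apply Cmod_ge_0. Qed.

Lemma Pw_pos s n : 0 < Pw s n.
Proof. apply Rp_pos. Qed.

Lemma Aw0 s a n : 0 <= Aw s a n.
Proof. unfold Aw. apply Rmult_le_pos. left; apply Pw_pos. apply al0. Qed.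

Lemma weightZ s k m : 0 <= s -> Pw s m <= cst s * (Pw s k + Pw s (m - k)).
Proof. intro Hs. pose proof (weight s (IZR k) (IZR (m - k)) Hs) as H.
  rewrite <- plus_IZR in H. replace (k + (m - k))%Z with m in H by lia. exact H. Qed.

Lemma NS_bound a n L1 : (forall j, al a j <= L1) -> zsumR_ex (al a) ->
  Cmod (nonres_sum a n) <= conv (al a) (conv (al a) (al a)) n.
Proof. intros Hb E.
  assert (Hg : forall m, 0 <= conv (al a) (al a) m <= L1 * zsumR (al a) /\ zsumR_ex (fun k => al a k * al a (m - k)%Z)).
  { intro m. destruct (conv_ex (al a) (al a) m L1) as [E1 [G1 G2]]; auto. apply al0. intro; split; auto; apply al0. }
  unfold nonres_sum. apply gen_cmod_le.
  2:{ apply (conv_ex (al a) (conv (al a) (al a)) n (L1 * zsumR (al a))); auto. apply al0. intro; apply Hg. }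
  intro n1. cbv beta.
  destruct (Hg (n - n1)%Z) as [_ Eg].
  destruct (zs_scal (al a n1) _ Eg) as [E2 V2].
  unfold conv. rewrite <- V2. apply gen_cmod_le; auto.
  intro n2. destruct Z.eq_dec.
  - rewrite Cmod_0. apply Rmult_le_pos. apply al0. apply Rmult_le_pos; apply al0.
  - rewrite !Cmod_mult. unfold al. right. ring.
Qed.

Lemma PY s a m BA L1 : 0 <= s -> (forall j, Aw s a j <= BA) -> (forall j, al a j <= L1) -> zsumR_ex (al a) ->
  Pw s m * conv (al a) (al a) m <= 2 * cst s * conv (al a) (Aw s a) m.
Proof. intros Hs HA Hb E.
  assert (c0 : 0 < cst s) by apply Rp_pos.
  destruct (conv_ex (al a) (Aw s a) m BA) as [E1 _]; auto. apply al0. intro; split; auto; apply Aw0.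
  destruct (conv_ex (al a) (al a) m L1) as [E0 _]; auto. apply al0. intro; split; auto; apply al0.
  destruct (conv_comm _ _ _ E1) as [E2 V2].
  destruct (zs_scal (cst s) _ E1) as [E3 V3]. destruct (zs_scal (cst s) _ E2) as [E4 V4].
  destruct (zs_plus _ _ E4 E3) as [E5 V5].
  destruct (zs_scal (Pw s m) _ E0) as [E6 V6].
  unfold conv at 1. rewrite <- V6.
  eapply Rle_trans; [refine (proj2 (zs_le (fun n => Pw s m * (al a n * al a (m - n)%Z)) _ _ E5))|].
  - intro k. cbv beta. pose proof (weightZ s k m Hs). pose proof (al0 a k). pose proof (al0 a (m - k)%Z).
    pose proof (Pw_pos s k). pose proof (Pw_pos s (m - k)%Z). pose proof (Pw_pos s m). unfold Aw.
    split. apply Rmult_le_pos; [lra|]. apply Rmult_le_pos; lra.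
    assert (0 <= al a k * al a (m - k)%Z) by (apply Rmult_le_pos; lra).
    apply Rle_trans with (cst s * (Pw s k + Pw s (m - k)%Z) * (al a k * al a (m - k)%Z)).
    apply Rmult_le_compat_r; auto. right; ring.
  - rewrite V5, V4, V3. fold (conv (Aw s a) (al a) m). rewrite V2. unfold conv. lra.
Qed.

Lemma Pdelta s a n BA L1 : 0 <= s -> (forall j, Aw s a j <= BA) -> (forall j, al a j <= L1) -> zsumR_ex (al a) ->
  Pw s n * conv (al a) (conv (al a) (al a)) n <=
  cst s * conv (conv (al a) (al a)) (Aw s a) n + 2 * cst s ^ 2 * conv (al a) (conv (al a) (Aw s a)) n.
Proof. intros Hs HA Hb E.
  set (g := conv (al a) (al a)). set (Y := conv (al a) (Aw s a)). set (c := cst s).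
  assert (c0 : 0 < c) by apply Rp_pos.
  set (L := zsumR (al a)).
  assert (L0 : 0 <= L) by (apply zs_nonneg; auto; apply al0).
  assert (Hg : forall m, 0 <= g m <= L1 * L /\ zsumR_ex (fun k => al a k * al a (m - k)%Z)).
  { intro m. destruct (conv_ex (al a) (al a) m L1) as [E1 [G1 G2]]; auto. apply al0. intro; split; auto; apply al0. }
  assert (HY : forall m, 0 <= Y m <= BA * L).
  { intro m. destruct (conv_ex (al a) (Aw s a) m BA) as [E1 [G1 G2]]; auto. apply al0. intro; split; auto; apply Aw0. }
  destruct (conv_l1 (al a) (al a) (al0 a) (al0 a) E E) as [Eg _]. fold g in Eg.
  destruct (conv_ex g (Aw s a) n BA) as [EgA _]; auto. intro; apply Hg. intro; split; auto; apply Aw0.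
  destruct (conv_comm _ _ _ EgA) as [EAg VAg].
  destruct (conv_ex (al a) (fun j => 2 * c * Y j) n (2 * c * (BA * L))) as [E2Y _]; auto. apply al0.
  { intro j. specialize (HY j). split; [|apply Rmult_le_compat_l]; nra. }
  destruct (conv_mono (al a) (fun j => Pw s j * g j) (fun j => 2 * c * Y j) n (al0 a)) as [EPg VPg]; auto.
  { intro j. split. apply Rmult_le_pos. left; apply Pw_pos. apply Hg. apply (PY s a j BA L1); auto. }
  assert (V2Y : conv (al a) (fun j => 2 * c * Y j) n = 2 * c * conv (al a) Y n).
  { destruct (conv_ex (al a) Y n (BA * L)) as [EY _]; auto. apply al0.
    destruct (zs_scal (2 * c) _ EY) as [_ V]. unfold conv at 2. rewrite <- V. unfold conv. apply zs_ext'. intro k. ring. }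
  destruct (Hg n) as [_ E0].
  destruct (zs_scal c _ EAg) as [E3 V3]. destruct (zs_scal c _ EPg) as [E4 V4].
  destruct (zs_plus _ _ E3 E4) as [E5 V5].
  assert (Hd : forall n, zsumR_ex (fun k => al a k * g (n - k)%Z)).
  { intro m. apply (conv_ex (al a) g m (L1 * L)); auto. apply al0. intro; apply Hg. }
  destruct (zs_scal (Pw s n) _ (Hd n)) as [E6 V6].
  unfold conv at 1. fold g. rewrite <- V6.
  eapply Rle_trans; [refine (proj2 (zs_le (fun k => Pw s n * (al a k * g (n - k)%Z)) _ _ E5))|].
  - intro k. cbv beta. pose proof (weightZ s k n Hs). pose proof (al0 a k). destruct (Hg (n - k)%Z) as [[G0 _] _].
    pose proof (Pw_pos s k). pose proof (Pw_pos s (n - k)%Z). pose proof (Pw_pos s n). unfold Aw.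
    split. apply Rmult_le_pos; [lra|]. apply Rmult_le_pos; lra.
    assert (0 <= al a k * g (n - k)%Z) by (apply Rmult_le_pos; lra).
    apply Rle_trans with (c * (Pw s k + Pw s (n - k)%Z) * (al a k * g (n - k)%Z)).
    apply Rmult_le_compat_r; auto. right; ring.
  - rewrite V5, V3, V4. fold (conv (Aw s a) g n). rewrite VAg.
    fold (conv (al a) (fun j => Pw s j * g j) n). fold c in VPg.
    assert (c * conv (al a) (fun j => Pw s j * g j) n <= c * (2 * c * conv (al a) Y n)).
    { rewrite <- V2Y. apply Rmult_le_compat_l; lra. }
    nra.
Qed.

Definition Zt s := zsumR (fun n => Rpower (W n) (- s)).

Lemma nonres_est s a M : 1 / 2 < s -> in_Hs s a -> Hs_sq s a <= M ^ 2 -> 0 <= M ->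
  in_Hs (- s) (nonres_term a) /\
  Hs_sq (- s) (nonres_term a) <= (2 * cst s ^ 2 + 8 * cst s ^ 4) * Zt s ^ 2 * M ^ 6.
Proof. intros Hs Ea Ma M0.
  set (c := cst s). assert (c0 : 0 < c) by apply Rp_pos.
  assert (HH : forall n, jbr2 s n * Cmod (a n) ^ 2 = Aw s a n ^ 2).
  { intro n. unfold Aw, al. rewrite Rpow_mult_distr. unfold Pw. rewrite Rp_sq. reflexivity. }
  destruct (zs_ext2 _ (fun n => Aw s a n ^ 2) HH Ea) as [EA VA].
  set (QA := zsumR (fun n => Aw s a n ^ 2)).
  assert (QM : QA <= M ^ 2) by (unfold QA; rewrite VA; exact Ma).
  assert (QA0 : 0 <= QA) by (apply zs_nonneg; auto; intro; apply pow2_ge_0).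
  assert (EZ : zsumR_ex (fun n => Rpower (W n) (- s))) by (apply zeta; lra).
  assert (HZ : forall n, (/ Pw s n) ^ 2 = Rpower (W n) (- s)).
  { intro n. rewrite Rp_opp. unfold Pw. rewrite <- (Rp_sq s n). rewrite pow_inv. reflexivity. }
  destruct (zs_cs (fun n => / Pw s n) (Aw s a)) as [Ex Cx].
  { intro n. left. apply Rinv_0_lt_compat, Pw_pos. }
  { apply Aw0. }
  { apply (zs_ext2 _ _ (fun n => eq_sym (HZ n)) EZ). }
  { exact EA. }
  assert (Hx : forall n, / Pw s n * Aw s a n = al a n).
  { intro n. unfold Aw. field. apply Rgt_not_eq, Pw_pos. }
  destruct (zs_ext _ (al a) Hx Ex) as [E VE].
  rewrite (zs_ext' (fun n => (/ Pw s n) ^ 2) (fun n => Rpower (W n) (- s))) in Cx.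
  2:{ intro n. rewrite Rp_opp. unfold Pw. rewrite <- (Rp_sq s n). rewrite pow_inv. reflexivity. }
  rewrite VE in Cx. fold (Zt s) QA in Cx.
  set (L := zsumR (al a)) in *.
  assert (L0 : 0 <= L) by (apply zs_nonneg; auto; apply al0).
  assert (Zt0 : 0 <= Zt s) by (apply zs_nonneg; auto; intro; left; apply Rp_pos).
  assert (L2 : L ^ 2 <= Zt s * M ^ 2) by (eapply Rle_trans; [exact Cx|]; apply Rmult_le_compat_l; auto).
  assert (Hb : forall j, al a j <= L) by (intro j; apply zs_term; auto; apply al0).
  set (BA := (1 + M ^ 2) / 2).
  assert (HA : forall j, Aw s a j <= BA).
  { intro j. assert (Aw s a j ^ 2 <= M ^ 2).
    { eapply Rle_trans; [|exact QM]. apply (zs_term (fun n => Aw s a n ^ 2)); auto. intro; apply pow2_ge_0. }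
    pose proof (pow2_ge_0 (Aw s a j - 1)). unfold BA. nra. }
  destruct (conv_l1 (al a) (al a) (al0 a) (al0 a) E E) as [Eg Vg]. fold L in Vg.
  set (g := conv (al a) (al a)) in *.
  assert (Hg : forall m, 0 <= g m).
  { intro m. apply (conv_ex (al a) (al a) m L); auto. apply al0. intro; split; auto; apply al0. }
  assert (G0 : 0 <= zsumR g) by (apply zs_nonneg; auto).
  set (Y := conv (al a) (Aw s a)).
  assert (HY : forall m, 0 <= Y m).
  { intro m. apply (conv_ex (al a) (Aw s a) m BA); auto. apply al0. intro; split; auto; apply Aw0. }
  destruct (young (al a) (Aw s a) (al0 a) (Aw0 s a) E EA) as [EY VY]. fold L QA Y in VY.
  destruct (young (al a) Y (al0 a) HY E EY) as [EX2 VX2]. fold L in VX2.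
  destruct (young g (Aw s a) Hg (Aw0 s a) Eg EA) as [EX1 VX1]. fold QA in VX1.
  set (X1 := conv g (Aw s a)) in *. set (X2 := conv (al a) Y) in *.
  destruct (zs_scal (2 * c ^ 2) _ EX1) as [F1 W1']. destruct (zs_scal (8 * c ^ 4) _ EX2) as [F2 W2'].
  destruct (zs_plus _ _ F1 F2) as [F3 W3].
  unfold in_Hs, Hs_sq.
  assert (PT : forall n, 0 <= jbr2 (- s) n * Cmod (nonres_term a n) ^ 2 <= 2 * c ^ 2 * X1 n ^ 2 + 8 * c ^ 4 * X2 n ^ 2).
  2:{ destruct (zs_le (fun n => jbr2 (- s) n * Cmod (nonres_term a n) ^ 2) _ PT F3) as [Ef Vf]. split; auto. eapply Rle_trans; [exact Vf|]. rewrite W3, W1', W2'.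
      assert (zsumR (fun n => X1 n ^ 2) <= L ^ 4 * M ^ 2).
      { eapply Rle_trans; [exact VX1|]. replace (L ^ 4) with ((L * L) ^ 2) by ring.
        apply Rmult_le_compat; auto. apply pow2_ge_0. apply pow_incr; split; auto. }
      assert (zsumR (fun n => X2 n ^ 2) <= L ^ 4 * M ^ 2).
      { eapply Rle_trans; [exact VX2|]. replace (L ^ 4 * M ^ 2) with (L ^ 2 * (L ^ 2 * M ^ 2)) by ring.
        apply Rmult_le_compat_l. apply pow2_ge_0. eapply Rle_trans; [exact VY|].
        apply Rmult_le_compat_l; auto. apply pow2_ge_0. }
      assert (L ^ 4 <= Zt s ^ 2 * M ^ 4).
      { replace (L ^ 4) with ((L ^ 2) ^ 2) by ring. replace (Zt s ^ 2 * M ^ 4) with ((Zt s * M ^ 2) ^ 2) by ring.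
        apply pow_incr. split; auto. apply pow2_ge_0. }
      assert (0 <= 2 * c ^ 2) by (pose proof (pow2_ge_0 c); lra).
      assert (0 <= 8 * c ^ 4) by (pose proof (pow2_ge_0 (c ^ 2)); replace (c ^ 4) with ((c ^ 2) ^ 2) by ring; lra).
      assert (0 <= M ^ 2) by apply pow2_ge_0.
      assert (L ^ 4 * M ^ 2 <= Zt s ^ 2 * M ^ 4 * M ^ 2) by (apply Rmult_le_compat_r; auto).
      replace ((2 * c ^ 2 + 8 * c ^ 4) * Zt s ^ 2 * M ^ 6) with (2 * c ^ 2 * (Zt s ^ 2 * M ^ 4 * M ^ 2) + 8 * c ^ 4 * (Zt s ^ 2 * M ^ 4 * M ^ 2)) by ring.
      apply Rplus_le_compat; apply Rmult_le_compat_l; lra. }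
  intro n.
  change (jbr2 (- s) n) with (Rpower (W n) (- s)). rewrite Rp_opp.
  unfold nonres_term. rewrite Cmod_mult, Cmod_R.
  pose proof (NS_bound a n L Hb E) as HN. fold g in HN.
  pose proof (Pdelta s a n BA L ltac:(lra) HA Hb E) as HP. fold g Y c X1 X2 in HP.
  set (w := Rpower (W n) s). set (d := conv (al a) g n) in *.
  assert (d0 : 0 <= d) by (apply (conv_ex (al a) g n (zsumR g)); auto; [apply al0|intro; split; auto; apply zs_term; auto]).
  assert (w1 : 1 <= w) by (apply Rp_ge1; lra).
  assert (Pw2 : Pw s n ^ 2 = w) by apply Rp_sq.
  assert (n2 : IZR n ^ 2 <= w ^ 2) by (apply n2_le; lra).
  pose proof (Cmod_ge_0 (nonres_sum a n)).
  split. apply Rmult_le_pos. left; apply Rinv_0_lt_compat; lra. apply pow2_ge_0.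
  assert (T1 : (Rabs (IZR n) * Cmod (nonres_sum a n)) ^ 2 <= IZR n ^ 2 * d ^ 2).
  { rewrite Rpow_mult_distr, pow2_abs. apply Rmult_le_compat_l. apply pow2_ge_0. apply pow_incr. lra. }
  assert (T2 : / w * (IZR n ^ 2 * d ^ 2) <= (Pw s n * d) ^ 2).
  { rewrite Rpow_mult_distr, Pw2.
    assert (/ w * IZR n ^ 2 <= w).
    { apply Rmult_le_reg_l with w. lra. rewrite <- Rmult_assoc, Rinv_r by lra. nra. }
    rewrite <- Rmult_assoc. apply Rmult_le_compat_r; auto. apply pow2_ge_0. }
  assert (T3 : (Pw s n * d) ^ 2 <= 2 * c ^ 2 * X1 n ^ 2 + 8 * c ^ 4 * X2 n ^ 2).
  { assert (0 <= Pw s n * d) by (apply Rmult_le_pos; auto; left; apply Pw_pos).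
    apply Rle_trans with ((c * X1 n + 2 * c ^ 2 * X2 n) ^ 2). apply pow_incr; auto.
    pose proof (pow2_ge_0 (c * X1 n - 2 * c ^ 2 * X2 n)). nra. }
  assert (0 <= / w) by (left; apply Rinv_0_lt_compat; lra).
  eapply Rle_trans; [apply Rmult_le_compat_l; [exact H0|exact T1]|]. lra.
Qed.

Lemma sq_of_norm s a M : in_Hs s a -> Hs_norm s a <= M -> Hs_sq s a <= M ^ 2.
Proof. intros E H. assert (0 <= Hs_sq s a).
  { apply zs_nonneg; auto. intro n. apply Rmult_le_pos. left; apply Rp_pos. apply pow2_ge_0. }
  unfold Hs_norm in H. rewrite <- (pow2_sqrt (Hs_sq s a)) by auto. apply pow_incr. split; auto. apply sqrt_pos. Qed.

Theorem lemma6p1 :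
  forall s : R, 1 / 2 < s ->
  exists K : R, 0 < K /\
  forall (beta gamma mu T : R) (v : R -> Z -> C),
    0 <= beta -> (mu = 1 \/ mu = -1) -> 0 < T ->
    cont_Hs s T v ->
    solves beta gamma mu T v ->
    forall M : R, (forall t, 0 <= t <= T -> Hs_norm s (v t) <= M) ->
    forall t, 0 <= t <= T ->
      (in_Hs (- s) (res_term (v t) (v 0)) /\
       Hs_norm (- s) (res_term (v t) (v 0)) <= K * M ^ 3) /\
      (in_Hs (- s) (nonres_term (v t)) /\
       Hs_norm (- s) (nonres_term (v t)) <= K * M ^ 3).
Proof.
  intros s Hs. set (K2 := (2 * cst s ^ 2 + 8 * cst s ^ 4) * Zt s ^ 2).
  exists (1 + sqrt K2). split. pose proof (sqrt_pos K2). lra.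
  intros beta gamma mu T v Hb Hmu HT [Hc _] Hsol M HM t Ht.
  assert (H0 : 0 <= 0 <= T) by lra.
  destruct (Hc t Ht) as [Ea _]. destruct (Hc 0 H0) as [Eb _].
  assert (M0 : 0 <= M) by (eapply Rle_trans; [apply sqrt_pos|apply (HM 0 H0)]).
  pose proof (sq_of_norm _ _ _ Ea (HM t Ht)) as Ma.
  pose proof (sq_of_norm _ _ _ Eb (HM 0 H0)) as Mb.
  assert (M3 : 0 <= M ^ 3) by (apply pow_le; auto).
  assert (K20 : 0 <= K2).
  { unfold K2. apply Rmult_le_pos. pose proof (pow2_ge_0 (cst s)). pose proof (pow2_ge_0 (cst s ^ 2)).
    replace (cst s ^ 4) with ((cst s ^ 2) ^ 2) by ring. lra. apply pow2_ge_0. }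
  split.
  - destruct (res_est s (v t) (v 0) M Hs Ea Ma Mb Eb) as [E V]. split; auto.
    unfold Hs_norm. eapply Rle_trans. apply sqrt_le_1_alt. exact V.
    replace (M ^ 4 * M ^ 2) with ((M ^ 3) ^ 2) by ring. rewrite sqrt_pow2 by auto.
    pose proof (sqrt_pos K2). nra.
  - destruct (nonres_est s (v t) M Hs Ea Ma M0) as [E V]. split; auto.
    unfold Hs_norm. eapply Rle_trans. apply sqrt_le_1_alt. exact V. fold K2.
    replace (K2 * M ^ 6) with (K2 * (M ^ 3) ^ 2) by ring. rewrite sqrt_mult by (auto; apply pow2_ge_0).
    rewrite sqrt_pow2 by auto. nra.
Qed.
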